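(* Let $3\le d\le 50$, let $(\alpha,\beta)\in\mathcal{A}_d$, let $\ell>1000$ be a prime, and let $(y_1,y_2)$ be integers satisfying \[ 4\beta y_2^\ell-\alpha^2 y_1^{2\ell}=d^2-1 . \] Suppose $|y_1|\ge 2$, $y_2\ge 2$ and $y_2\ne y_1^2$. Let $\alpha_1=4\beta/\alpha^2$ and $\alpha_2=y_1^2/y_2$. Then $\alpha_1$ and $\alpha_2$ are positive and multiplicatively independent. Moreover, writing $\Lambda=\log\alpha_1-\ell\log\alpha_2$, we have \[ 0<\Lambda<\frac{d^2-1}{\alpha^2 y_1^{2\ell}} . \]
   Context: For a prime $q$ let $\mu_q=\operatorname{ord}_q(d^2-1)$ and $\nu_q=\operatorname{ord}_q(d)$. To each prime $q$ associate a finite set $T_q\subset\mathbb{Z}^2$: if $q\nmid d(d^2-1)$, $T_q=\{(0,0)\}$. For $q=2$: $T_2=\{(0,1-\nu_2)\}$ if $2\mid d$; $T_2=\{(1,0),(\mu_2/2,1-\mu_2/2),(3-\mu_2,\mu_2-2)\}$ if $2\nmid d$ and $\mu_2$ is even; $T_2=\{(1,0),(3-\mu_2,\mu_2-2)\}$ if $2\nmid d$ and $\mu_2$ is odd. For odd $q\mid d$: $T_q=\{(-\nu_q,0),(0,-\nu_q)\}$. For odd $q\mid d^2-1$: $T_q=\{(0,0),(-\mu_q,\mu_q),(\mu_q/2,-\mu_q/2)\}$ if $\mu_q$ is even, and $T_q=\{(0,0),(-\mu_q,\mu_q)\}$ if $\mu_q$ is odd. Then $\mathcal{A}_d$ is the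 set of pairs of positive rationals $(\alpha,\beta)$ with $(\operatorname{ord}_q(\alpha),\operatorname{ord}_q(\beta))\in T_q$ for every prime $q$. *)

(* Defs.v *)
From HB Require Import structures.
From mathcomp Require Import all_boot all_order all_algebra.
From mathcomp Require Import all_classical all_reals all_analysis.
Set Implicit Arguments. Unset Strict Implicit. Unset Printing Implicit Defensive.
Import Order.TTheory GRing.Theory Num.Theory.
Local Open Scope ring_scope.

(* q-adic valuation of a rational number x (ord_q(0) = 0, irrelevant here
   since only positive rationals are considered). *)
Definition qval (q : nat) (x : rat) : int :=
  (logn q `|numq x|%N)%:Z - (logn q `|denq x|%N)%:Z.

Definition mu_ (d q : nat) : nat := logn q (d ^ 2 - 1)%N.
Definition nu_ (d q : nat) : nat := logn q d.

Definition inT (d q : nat) (p : int * int) : Prop :=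
  let mu := mu_ d q in let nu := nu_ d q in
  if ~~ (q %| d * (d ^ 2 - 1))%N then p = (0, 0)
  else if q == 2%N then
    (if (2 %| d)%N then p = (0, 1 - nu%:Z)
     else if ~~ odd mu then
       p = (1, 0) \/ p = ((mu./2)%:Z, 1 - (mu./2)%:Z) \/ p = (3 - mu%:Z, mu%:Z - 2)
     else p = (1, 0) \/ p = (3 - mu%:Z, mu%:Z - 2))
  else if (q %| d)%N then p = (- nu%:Z, 0) \/ p = (0, - nu%:Z)
  else
    if ~~ odd mu then p = (0, 0) \/ p = (- mu%:Z, mu%:Z) \/ p = ((mu./2)%:Z, - (mu./2)%:Z)
    else p = (0, 0) \/ p = (- mu%:Z, mu%:Z).

Definition in_A (d : nat) (alpha beta : rat) : Prop :=
  0 < alpha /\ 0 < beta /\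
  forall q : nat, prime q -> inT d q (qval q alpha, qval q beta).

Definition mult_indep (a b : rat) : Prop :=
  forall m n : int, a ^ m * b ^ n = 1 -> m = 0 /\ n = 0.

(* Main.v *)
Require Import Defs.
From HB Require Import structures.
From mathcomp Require Import all_boot all_order all_algebra.
From mathcomp Require Import all_classical all_reals all_analysis.
From mathcomp Require Import ring lra zify.
Import Order.TTheory GRing.Theory Num.Theory.
Local Open Scope ring_scope.

Lemma core_gap (e : rat) (k A B : nat) : 1 < e -> (0 < k)%N -> (0 < A)%N -> (0 < B)%N ->
  e ^+ k = A%:R / B%:R -> 1 + (B%:R)^-1 <= e.
Proof.
move=> e1 k0 A0 B0 he.
pose P := `|numq e|%N; pose Qd := `|denq e|%N.
have eP : e = P%:R / Qd%:R.
  rewrite /P /Qd !natr_absz !ger0_norm ?divq_num_den //.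
  by rewrite numq_ge0; apply: ltW; exact: lt_trans ltr01 e1.
have Qd0 : (0 < Qd)%N by rewrite absz_gt0 denq_neq0.
have Qd0' : 0 < Qd%:R :> rat by rewrite ltr0n.
have hcop : coprime P Qd := coprime_num_den e.
have heq : (A * Qd ^ k = B * P ^ k)%N.
  apply/eqP; rewrite -(eqr_nat rat) !natrM !natrX; apply/eqP.
  have Bn : B%:R != 0 :> rat by rewrite pnatr_eq0 -lt0n.
  have Qn : Qd%:R ^+ k != 0 :> rat by rewrite expf_neq0 // gt_eqF.
  move/eqP: he; rewrite eP expr_div_n eqr_div // => /eqP.
  by move=> <-; rewrite mulrC.
have dvd : (Qd ^ k %| B)%N.
  rewrite -(@Gauss_dvdl _ _ (P ^ k)) -?heq ?dvdn_mull //.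
  by rewrite coprimeXl // coprimeXr // coprime_sym.
have QB : (Qd <= B)%N.
  apply: leq_trans (dvdn_leq B0 dvd).
  by case: k k0 {he heq dvd} => // k _; rewrite expnS leq_pmulr // expn_gt0 Qd0.
have PQ : (Qd < P)%N.
  rewrite -(ltr_nat rat); move: e1; rewrite eP ltr_pdivlMr // mul1r //.
have PQ' : Qd%:R + 1 <= P%:R :> rat by rewrite natr1 ler_nat.
have QB' : Qd%:R <= B%:R :> rat by rewrite ler_nat.
have B0' : 0 < B%:R :> rat by rewrite ltr0n.
rewrite eP ler_pdivlMr // mulrDl mul1r.
have : Qd%:R * (B%:R)^-1 <= 1 :> rat.
  by rewrite ler_pdivrMr // mul1r.
rewrite mulrC; lra.
Qed.
Lemma gap1 (e : rat) (j : int) (A B : nat) : 1 < e -> j != 0 -> (0 < A)%N -> (0 < B)%N ->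
  e ^ j = A%:R / B%:R -> 1 + (A%:R)^-1 <= e \/ 1 + (B%:R)^-1 <= e.
Proof.
move=> e1 j0 A0 B0; case: j j0 => [k|k] j0 he.
- right; apply: (@core_gap e k A B e1 _ A0 B0 he); rewrite lt0n; exact: j0.
- left; apply: (@core_gap e k.+1 B A e1 _ B0 A0) => //.
  by rewrite -[e ^+ _]invrK (_ : (e ^+ k.+1)^-1 = A%:R / B%:R) // invf_div.
Qed.

Lemma gap (g : rat) (N t : int) (A B : nat) : 0 < g -> t != 0 -> 1 < g ^ N ->
  (0 < A)%N -> (0 < B)%N -> g ^ t = A%:R / B%:R ->
  1 + (A%:R)^-1 <= g ^ N \/ 1 + (B%:R)^-1 <= g ^ N.
Proof.
move=> g0 t0 gN A0 B0 ht.
have key : forall (e : rat) (M : int), 1 < e -> 1 < e ^ M -> e <= e ^ M.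
  move=> e M e1 eM; rewrite -[X in X <= _]expr1z (ler_eXz2l e1).
  by move: eM; rewrite -(expr0z e) (ltr_eXz2l e1).
have [g1|g1|g1] := ltgtP g 1.
- have e1 : 1 < g^-1 by rewrite invf_gt1.
  have eN : g ^ N = g^-1 ^ (- N) by rewrite exprz_inv opprK.
  have et : g^-1 ^ (- t) = A%:R / B%:R by rewrite exprz_inv opprK.
  rewrite eN in gN *; have := key _ _ e1 gN.
  have t0' : - t != 0 by rewrite oppr_eq0.
  have [h|h] := @gap1 _ (- t) _ _ e1 t0' A0 B0 et.
  + by move=> h2; left; apply: le_trans h h2.
  + by move=> h2; right; apply: le_trans h h2.
- have := key _ _ g1 gN.
  have [h|h] := @gap1 _ _ _ _ g1 t0 A0 B0 ht.
  + by move=> h2; left; apply: le_trans h h2.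
  + by move=> h2; right; apply: le_trans h h2.
- by move: gN; rewrite g1 exp1rz ltxx.
Qed.
Lemma dep_gamma (a b : rat) (m n : int) : 0 < a -> 0 < b -> a ^ m * b ^ n = 1 ->
  (m != 0) || (n != 0) ->
  exists g : rat, exists s t : int, [/\ 0 < g, a = g ^ s & b = g ^ t].
Proof.
move=> a0 b0 h mn.
have ua : a \is a GRing.unit by rewrite unitfE gt_eqF.
have ub : b \is a GRing.unit by rewrite unitfE gt_eqF.
set g := gcdz m n.
have g0 : g != 0 by rewrite gcdz_eq0 negb_and.
pose m' := (m %/ g)%Z; pose n' := (n %/ g)%Z.
have hm : m = m' * g by rewrite divzK // dvdz_gcdl.
have hn : n = n' * g by rewrite divzK // dvdz_gcdr.
have h2 : a ^ m' * b ^ n' = 1.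
  have : (a ^ m' * b ^ n') ^ g == 1 by rewrite exprzMl ?unitrXz // !exprz_exp -hm -hn h.
  rewrite pexprz_eq1 ?(negbTE g0) /=; first by move/eqP.
  by apply: mulr_ge0; apply: exprz_ge0; apply: ltW.
have [u [v huv]] := Bezoutz m n.
have huv' : u * m' + v * n' = 1.
  apply: (mulIf g0); rewrite mul1r -[RHS]huv hm hn; ring.
have hb : b ^ n' = a ^ (- m') by rewrite -invr_expz (mulr1_eq h2).
exists (a ^ v * b ^ (- u)), n', (- m'); split.
- by apply: mulr_gt0; apply: exprz_gt0.
- rewrite exprzMl ?unitrXz // !exprz_exp.
  have -> : b ^ (- u * n') = a ^ (u * m').
    by rewrite (mulrC (- u)) -(exprz_exp b) hb exprz_exp; congr (_ ^ _); ring.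
  by rewrite -exprzDr // (_ : v * n' + u * m' = 1) ?expr1z // -huv'; ring.
- rewrite exprzMl ?unitrXz // !exprz_exp.
  have -> : a ^ (v * - m') = b ^ (v * n').
    by rewrite (mulrC v) -(exprz_exp a) -hb exprz_exp; congr (_ ^ _); ring.
  by rewrite -exprzDr // (_ : v * n' + - u * - m' = 1) ?expr1z // -huv'; ring.
Qed.
Lemma inT_bound (d q : nat) (a b : int) : (2 <= d)%N -> prime q -> inT d q (a, b) ->
  - (logn q (d * (d ^ 2 - 1)))%:Z <= a /\ - (logn q (d * (d ^ 2 - 1)))%:Z <= b.
Proof.
move=> d2 qp; rewrite /inT /mu_ /nu_.
have d0 : (0 < d)%N by lia.
have d10 : (0 < d ^ 2 - 1)%N.
  by rewrite subn_gt0 -{1}(exp1n 2) ltn_exp2r.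
rewrite lognM //.
set mu := logn q (d ^ 2 - 1); set nu := logn q d.
have hm : (mu./2 <= mu)%N by rewrite leq_half_double -addnn; lia.
case: ifP => h1.
  by case=> -> ->; lia.
case: ifP => h2.
  case: ifP => h3.
    by case=> -> ->; lia.
  have mu1 : (1 <= mu)%N.
    rewrite /mu logn_gt0 mem_primes qp d10 /=.
    move/negbFE: h1; rewrite (eqP h2) Euclid_dvdM // h3 //.
  case: ifP => h4.
    by move=> [[-> ->]|[[-> ->]|[-> ->]]]; lia.
  by move=> [[-> ->]|[-> ->]]; lia.
case: ifP => h3.
  by move=> [[-> ->]|[-> ->]]; lia.
case: ifP => h4.
  by move=> [[-> ->]|[[-> ->]|[-> ->]]]; lia.
by move=> [[-> ->]|[-> ->]]; lia.
Qed.
Lemma den_bound (r : rat) (K : nat) : 0 < r -> (0 < K)%N ->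
  (forall q, prime q -> - (logn q K)%:Z <= qval q r) -> (K%:R)^-1 <= r.
Proof.
move=> r0 K0 hq.
pose Nn := `|numq r|%N; pose Dn := `|denq r|%N.
have cop : coprime Nn Dn := coprime_num_den r.
have Dn0 : (0 < Dn)%N by rewrite absz_gt0 denq_neq0.
have Nn0 : (0 < Nn)%N by rewrite absz_gt0 numq_eq0 gt_eqF.
have hl : forall p, (logn p Dn <= logn p K)%N.
  move=> p; case pp: (prime p); last by rewrite lognE pp.
  have [hn|hn] := posnP (logn p Nn).
    by have := hq p pp; rewrite /qval -/Nn -/Dn hn; lia.
  have pN : (p %| Nn)%N by move: hn; rewrite logn_gt0 mem_primes => /and3P[].
  by rewrite logn_coprime // (coprime_dvdl pN cop).
have hg : gcdn Dn K = Dn.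
  apply: eqn_from_log => //; first by rewrite gcdn_gt0 Dn0.
  by move=> p; rewrite logn_gcd // (minn_idPl (hl p)).
have DK : (Dn <= K)%N by rewrite -hg dvdn_leq // dvdn_gcdr.
have eP : r = Nn%:R / Dn%:R.
  rewrite /Nn /Dn !natr_absz !ger0_norm ?divq_num_den //.
  by rewrite numq_ge0 ltW.
rewrite eP.
apply: (@le_trans _ _ (Dn%:R)^-1).
  by rewrite lef_pV2 ?posrE ?ltr0n // ler_nat.
by rewrite ler_pdivlMr ?ltr0n // mulVf ?pnatr_eq0 -?lt0n // ler1n.
Qed.

Lemma big_pow (K Q l : nat) : (K <= 2 ^ 18)%N -> (2 <= Q)%N -> (1000 < l)%N ->
  (K ^ 3 * Q < Q ^ l)%N.
Proof.
move=> hK hQ hl.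
have e : l = (l - 1).+1 by lia.
rewrite e [(Q ^ _)%N]expnS mulnC ltn_pmul2l; last by lia.
apply: (@leq_trans (2 ^ (l - 1))).
  apply: (@leq_ltn_trans ((2 ^ 18) ^ 3)); first by rewrite leq_exp2r.
  by rewrite -expnM ltn_exp2l //; lia.
by rewrite leq_exp2r //; lia.
Qed.

Theorem lemma5p2 (R : realType) (d : nat) (alpha beta : rat) (l : nat)
    (y1 y2 : int) :
  (3 <= d <= 50)%N ->
  in_A d alpha beta ->
  prime l -> (1000 < l)%N ->
  4 * beta * (y2%:~R) ^+ l - alpha ^+ 2 * (y1%:~R) ^+ (2 * l) = ((d ^ 2 - 1)%N)%:R :> rat ->
  2 <= `|y1| -> 2 <= y2 -> y2 != y1 ^+ 2 ->
  let alpha1 : rat := 4 * beta / alpha ^+ 2 in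
  let alpha2 : rat := (y1 ^+ 2)%:~R / y2%:~R in
  [/\ 0 < alpha1, 0 < alpha2, mult_indep alpha1 alpha2 &
   let Lambda : R := ln (ratr alpha1) - l%:R * ln (ratr alpha2) in
   0 < Lambda /\
   Lambda < ratr (((d ^ 2 - 1)%N)%:R / (alpha ^+ 2 * (y1%:~R) ^+ (2 * l)))].
Proof.
move=> /andP[d3 d50] [a0 [b0 hT]] lp l1000 heq y1_2 y2_2 yne alpha1 alpha2.
set D := ((d ^ 2 - 1)%N)%:R : rat in heq *.
set x := D / _.
pose A := `|y1 ^+ 2|%N; pose B := `|y2|%N.
have hA : A%:R = (y1 ^+ 2)%:~R :> rat.
  by rewrite /A natr_absz ger0_norm // sqr_ge0.
have hB : B%:R = y2%:~R :> rat.
  by rewrite /B natr_absz ger0_norm //; clear -y2_2; lia.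
have A2 : (2 <= A)%N.
  have : 2 <= y1 ^+ 2 :> int.
    rewrite -real_normK ?num_real // expr2; apply: (le_trans y1_2).
    by rewrite ler_peMr ?normr_ge0 // (le_trans _ y1_2).
  move=> h; rewrite /A; clear -h; lia.
have B2 : (2 <= B)%N by rewrite /B; clear -y2_2; lia.
have A0 : 0 < A%:R :> rat by rewrite ltr0n; clear -A2; lia.
have B0 : 0 < B%:R :> rat by rewrite ltr0n; clear -B2; lia.
have eY1 : (y1%:~R : rat) ^+ (2 * l) = A%:R ^+ l by rewrite exprM hA rmorphXn.
have eY2 : (y2%:~R : rat) ^+ l = B%:R ^+ l by rewrite hB.
rewrite eY1 eY2 in heq; rewrite /x eY1.
have ea2 : alpha2 = A%:R / B%:R by rewrite /alpha2 hA hB.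
have D0 : 0 < D by rewrite ltr0n subn_gt0 -{1}(exp1n 2) ltn_exp2r //; clear -d3; lia.
have AL : 0 < A%:R ^+ l :> rat by rewrite exprn_gt0.
have BL : 0 < B%:R ^+ l :> rat by rewrite exprn_gt0.
have x0 : 0 < D / (alpha ^+ 2 * A%:R ^+ l).
  by rewrite divr_gt0 // mulr_gt0 // exprn_gt0.
have a1p : 0 < alpha1 by rewrite divr_gt0 ?exprn_gt0 // mulr_gt0.
have a2p : 0 < alpha2 by rewrite ea2 divr_gt0.
have key : alpha1 = (1 + D / (alpha ^+ 2 * A%:R ^+ l)) * alpha2 ^+ l.
  rewrite ea2 expr_div_n /alpha1 -heq; field.
  by rewrite !gt_eqF ?exprn_gt0.
pose K := (d * (d ^ 2 - 1))%N.
have d2 : (2 <= d)%N by clear -d3; lia.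
have d10 : (0 < d ^ 2 - 1)%N.
  by rewrite subn_gt0 -{1}(exp1n 2) ltn_exp2r //; clear -d3; lia.
have K0 : (0 < K)%N by rewrite /K muln_gt0 d10; clear -d3; lia.
have hK18 : (K <= 2 ^ 18)%N.
  apply: (@leq_trans (d * d ^ 2)); first by rewrite leq_mul // leq_subr.
  rewrite -expnS (_ : 18 = 6 * 3)%N // expnM leq_exp2r //.
  by apply: (leq_trans d50).
have DK : D < K%:R by rewrite ltr_nat /K ltn_Pmull //; clear -d3; lia.
have aK : (K%:R)^-1 <= alpha.
  apply: den_bound => // q qp; exact: proj1 (@inT_bound d q _ _ d2 qp (hT q qp)).
have bK : (K%:R)^-1 <= beta.
  apply: den_bound => // q qp; exact: proj2 (@inT_bound d q _ _ d2 qp (hT q qp)).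
set k := K%:R : rat in DK aK bK.
have k1 : 1 <= k by rewrite /k ler1n.
have ak : 1 <= alpha * k by rewrite -(ler_pdivrMr _ _ (lt_le_trans ltr01 k1)) div1r.
have bk : 1 <= beta * k by rewrite -(ler_pdivrMr _ _ (lt_le_trans ltr01 k1)) div1r.
split => //.
- move=> m n hmn.
  case: (boolP ((m != 0) || (n != 0))) => [mn|]; last first.
    by rewrite negb_or !negbK => /andP[/eqP -> /eqP ->].
  have [g [s [t [g0 es et]]]] := @dep_gamma _ _ m n a1p a2p hmn mn.
  have t0 : t != 0.
    apply/negP => /eqP t0; move: et; rewrite t0 expr0z /alpha2 => /divr1_eq/eqP.
    by rewrite eqr_int eq_sym (negbTE yne).
  have ug : g \is a GRing.unit by rewrite unitfE gt_eqF.
  have e1x : g ^ (s - t * l%:Z) = 1 + D / (alpha ^+ 2 * A%:R ^+ l).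
    have -> : 1 + D / (alpha ^+ 2 * A%:R ^+ l) = alpha1 / alpha2 ^+ l.
      by rewrite key mulfK // expf_neq0 // gt_eqF.
    by rewrite es et exprnP exprz_exp exprzDr // invr_expz.
  have gN : 1 < g ^ (s - t * l%:Z) by rewrite e1x ltrDl.
  have etAB : g ^ t = A%:R / B%:R by rewrite -et ea2.
  have [h|h] := @gap _ _ _ _ _ g0 t0 gN (ltn_trans (ltnSn 0) A2) (ltn_trans (ltnSn 0) B2) etAB.
  + exfalso.
    move: h; rewrite e1x lerD2l => h.
    have cA := @big_pow _ _ _ hK18 A2 l1000.
    have cA' : k ^+ 3 * A%:R < A%:R ^+ l by rewrite /k -!natrX -natrM ltr_nat.
    have s1 : D * A%:R < k * A%:R by rewrite ltr_pM2r.
    have sq : 1 <= (alpha * k) ^+ 2 by apply: exprn_ege1.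
    have kA : 0 <= k * A%:R := mulr_ge0 (ltW (lt_le_trans ltr01 k1)) (ltW A0).
    have s2 : k * A%:R <= k * A%:R * (alpha * k) ^+ 2.
      by have := ler_wpM2l kA sq; rewrite mulr1.
    have s3 : k * A%:R * (alpha * k) ^+ 2 = alpha ^+ 2 * (k ^+ 3 * A%:R) by ring.
    have s4 : alpha ^+ 2 * (k ^+ 3 * A%:R) < alpha ^+ 2 * A%:R ^+ l.
      by rewrite ltr_pM2l // exprn_gt0.
    have : D / (alpha ^+ 2 * A%:R ^+ l) * A%:R < 1.
      rewrite mulrAC ltr_pdivrMr ?mul1r ?mulr_gt0 ?exprn_gt0 //.
      by apply: (lt_le_trans s1); rewrite -s3 in s4; apply: (le_trans s2); apply: ltW.
    have : 1 <= D / (alpha ^+ 2 * A%:R ^+ l) * A%:R.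
      by rewrite -(ler_pdivrMr _ _ A0) div1r.
    by move=> h1 h2; have := le_lt_trans h1 h2; rewrite ltxx.
  + exfalso.
    move: h; rewrite e1x lerD2l => h.
    have cB := @big_pow _ _ _ hK18 B2 l1000.
    have cB' : k ^+ 3 * B%:R < B%:R ^+ l by rewrite /k -!natrX -natrM ltr_nat.
    have W : alpha ^+ 2 * A%:R ^+ l = 4 * beta * B%:R ^+ l - D by rewrite -heq; ring.
    have B1 : 1 <= B%:R :> rat by rewrite ler1n; clear -B2; lia.
    have k0 : 0 <= k by apply: le_trans k1; exact: ler01.
    have s1 : D * (B%:R + 1) <= k * (B%:R + 1).
      by rewrite ler_pM2r; [exact: ltW | clear -B1; lra].
    have s2 : k * (B%:R + 1) <= 2 * k * B%:R.
      have : k * 1 <= k * B%:R by rewrite ler_pM2l //; clear -k1; lra.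
      by clear -k1 B1; lra.
    have s3 : 2 * k * B%:R <= 2 * k * B%:R * (beta * k).
      rewrite ler_peMr //; clear -k1 B1; nra.
    have s4 : 2 * k * B%:R * (beta * k) = 2 * beta * (k ^+ 2 * B%:R) by ring.
    have s5 : k ^+ 2 * B%:R <= k ^+ 3 * B%:R.
      rewrite ler_pM2r // exprS ler_peMl //.
      by apply: mulr_ge0 => //; exact: exprn_ge0.
    have b2 : 0 < 2 * beta by clear -b0; lra.
    have goalB : D * (B%:R + 1) < 4 * beta * B%:R ^+ l.
      apply: (le_lt_trans s1); apply: (le_lt_trans s2); apply: (le_lt_trans s3).
      rewrite s4; apply: (le_lt_trans (y := 2 * beta * (k ^+ 3 * B%:R))).
        by rewrite ler_pM2l.
      apply: (lt_le_trans (y := 2 * beta * B%:R ^+ l)).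
        by rewrite ltr_pM2l.
      have : 0 < beta * B%:R ^+ l by apply: mulr_gt0.
      rewrite -!mulrA; clear; lra.
    have : D / (alpha ^+ 2 * A%:R ^+ l) * B%:R < 1.
      rewrite mulrAC ltr_pdivrMr ?mul1r ?mulr_gt0 ?exprn_gt0 //.
      rewrite W; move: goalB; rewrite mulrDr mulr1; clear; lra.
    have : 1 <= D / (alpha ^+ 2 * A%:R ^+ l) * B%:R.
      by rewrite -(ler_pdivrMr _ _ B0) div1r.
    by move=> h1 h2; have := le_lt_trans h1 h2; rewrite ltxx.
- set r := ratr (D / (alpha ^+ 2 * A%:R ^+ l)) : R.
  have r0 : 0 < r by rewrite ltr0q.
  have a2R : 0 < ratr alpha2 :> R by rewrite ltr0q.
  have r1 : 0 < 1 + r by clear -r0; lra.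
  have hL : ln (ratr alpha1) - l%:R * ln (ratr alpha2) = ln (1 + r) :> R.
    rewrite key rmorphM rmorphD rmorph1 rmorphXn -/r lnM ?posrE ?exprn_gt0 //.
    by rewrite lnXn // mulr_natl addrK.
  rewrite hL; split; first by apply: ln_gt0; clear -r0; lra.
  rewrite -[X in _ < X](expRK r) ltr_ln ?posrE ?expR_gt0 //.
  by apply: expR_gt1Dx; rewrite gt_eqF.
Qed.
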